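(* Let $\mu$ be a shift-ergodic measure with full support on $Q^{\mathbb{Z}}$ and $F$ a cellular automaton over $Q$ admitting a word $w$ as a wall. Then for every word $v\in Q^*$: $v\in L_\mu(F)$ if and only if there exist integers $t,p\geq1$ and words $v_1,v_2,u$ such that $F^t\big({}^\omega(wu)^\omega\big)={}^\omega(v_1vv_2)^\omega$ and $F^p\big({}^\omega(v_1vv_2)^\omega\big)={}^\omega(v_1vv_2)^\omega$.
   Context: A CA $F$ over finite alphabet $Q$ has radius $r$, local rule $\delta$, global map $F(c)_z=\delta(c_{z-r},\dots,c_{z+r})$. $[u]_i=\{c:c_{[i,i+|u|-1]}=u\}$. $L_\mu(F)=\{u:\mu(F^{-t}([u]_0))\not\to0\}$. ${}^\omega x^\omega$ denotes the bi-infinite configuration obtained by repeating the word $x$ periodically. $\mu$ is shift-ergodic if it is shift-invariant and every shift-invariant measurable set has measure 0 or 1; full support means $\mu([u]_0)>0$ for all words $u$. A word $w$ is a wall for $F$ if for all $c,c'\in[w]_0$: (1) if $c_z=c'_z$ for all $z<0$ then $F^t(c)_z=F^t(c')_z$ for all $z<0$ and $t\ge1$; (2) if $c_z=c'_z$ for all $z\ge|w|$ then $F^t(c)_z=F^t(c')_z$ for all $z\ge|w|$ and $t\ge1$. *)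

(* Defs.v *)
From HB Require Import structures.
From mathcomp Require Import all_boot all_order all_algebra.
From mathcomp Require Import all_classical all_reals all_analysis.
Set Implicit Arguments. Unset Strict Implicit. Unset Printing Implicit Defensive.
Import Order.TTheory GRing.Theory Num.Theory.
Local Open Scope classical_set_scope.
Local Open Scope ring_scope.

Section CA.
Variable Q : pointedType.

Definition config := int -> Q.

Definition ca_global (r : nat) (delta : (r.*2.+1).-tuple Q -> Q) (c : config)
  : config :=
  fun z => delta [tuple c (z - r%:Z + i%:Z) | i < r.*2.+1].

Definition cyl (u : seq Q) (i : int) : set config :=
  [set c | forall k : nat, (k < size u)%N -> c (i + k%:Z) = nth point u k].

Definition cylinders : set (set config) := [set A | exists u i, A = cyl u i].

Definition CfgSpace := g_sigma_algebraType cylinders.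

Definition shift (c : config) : config := fun z => c (z + 1).

Definition shift_invariant (R : realType) (mu : probability CfgSpace R) :=
  forall A : set CfgSpace, measurable A -> mu (shift @^-1` A) = mu A.

Definition shift_ergodic (R : realType) (mu : probability CfgSpace R) :=
  shift_invariant mu /\
  forall A : set CfgSpace, measurable A -> shift @^-1` A = A ->
    mu A = 0%E \/ mu A = 1%E.

Definition full_support (R : realType) (mu : probability CfgSpace R) :=
  forall u : seq Q, (0 < mu (cyl u 0))%E.

Definition L_mu (R : realType) (mu : probability CfgSpace R)
  (F : config -> config) (u : seq Q) : Prop :=
  ~ ((fun t : nat => mu (iter t F @^-1` cyl u 0)) @ \oo --> 0%E).

Definition wall (F : config -> config) (w : seq Q) : Prop :=
  forall c c' : config, cyl w 0 c -> cyl w 0 c' ->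
    ((forall z : int, z < 0 -> c z = c' z) ->
       forall t : nat, (1 <= t)%N -> forall z : int, z < 0 ->
         iter t F c z = iter t F c' z) /\
    ((forall z : int, (size w)%:Z <= z -> c z = c' z) ->
       forall t : nat, (1 <= t)%N -> forall z : int, (size w)%:Z <= z ->
         iter t F c z = iter t F c' z).

(* ^omega(a::s)^omega : the periodic configuration repeating the nonempty
   word a::s, with position 0 carrying the first letter a *)
Definition omega (a : Q) (s : seq Q) : config :=
  fun z => nth a (a :: s) `|(z %% (size s).+1%:Z)%Z|%N.

End CA.

(* Main.v *)
Require Import Defs.
From HB Require Import structures.
From mathcomp Require Import all_boot all_order all_algebra.
From mathcomp Require Import all_classical all_reals all_analysis.
From mathcomp Require Import zify ring lra.
Import Order.TTheory GRing.Theory Num.Theory.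
Local Open Scope classical_set_scope.
Local Open Scope ring_scope.


Section Comb.
Variable Q : pointedType.
Variables (r : nat) (delta : (r.*2.+1).-tuple Q -> Q).
Local Notation F := (ca_global delta).

Definition tr (k : int) (c : config Q) : config Q := fun z => c (z + k).

Lemma F_tr k c : F (tr k c) = tr k (F c).
Proof.
apply: funext => z; rewrite /ca_global /tr; congr delta; apply: eq_mktuple => i.
congr c; ring.
Qed.

Lemma iterF_tr t k c : iter t F (tr k c) = tr k (iter t F c).
Proof. by elim: t => //= t ->; rewrite F_tr. Qed.

Definition agree (c c' : config Q) (a b : int) :=
  forall z, a <= z < b -> c z = c' z.

Lemma agree_sub c c' a b a' b' : a' <= a -> b <= b' ->
  agree c c' a' b' -> agree c c' a b.
Proof. move=> h1 h2 H z /andP[h3 h4]; apply: H; apply/andP; lia. Qed.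

Lemma F_local c c' a b : agree c c' (a - r%:Z) (b + r%:Z) ->
  agree (F c) (F c') a b.
Proof.
move=> H z /andP[h1 h2]; rewrite /ca_global; congr delta; apply: eq_mktuple => i.
apply: H; have hi : (nat_of_ord i < (r * 2).+1)%N by rewrite muln2 ltn_ord.
apply/andP; lia.
Qed.

Lemma iterF_local t c c' a b :
  agree c c' (a - (r * t)%N%:Z) (b + (r * t)%N%:Z) ->
  agree (iter t F c) (iter t F c') a b.
Proof.
elim: t a b => [|t IH] a b H /=.
  by apply: agree_sub H; lia.
apply: F_local; apply: IH; apply: agree_sub H; lia.
Qed.

Definition per (L : int) (c : config Q) := forall z, c (z + L) = c z.

Lemma per_tr L c : per L c -> tr L c = c.
Proof. by move=> H; apply: funext => z; apply: H. Qed.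

Lemma per_iter L t c : per L c -> per L (iter t F c).
Proof.
move=> /per_tr H z; have := congr1 (fun c => iter t F c z) H.
by rewrite iterF_tr.
Qed.

Lemma per_mul L c : per L c -> forall (k : nat) z, c (z + (k%:Z * L)) = c z.
Proof.
move=> H; elim=> [|k IH] z; first by rewrite mul0r addr0.
by rewrite -[k.+1]addn1 PoszD mulrDl mul1r addrA H IH.
Qed.

Lemma per_mod L c : per L c -> 0 < L -> forall z, c z = c (z %% L)%Z.
Proof.
move=> H L0 z; rewrite {1}(divz_eq z L).
case: (z %/ L)%Z => k.
  by rewrite addrC per_mul.
rewrite -(@per_mul L c H k.+1 (Negz k * L + (z %% L)%Z)); congr c.
rewrite NegzE; ring.
Qed.


Lemma cyl_tr w i c : cyl w i c <-> cyl w 0 (tr i c).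
Proof.
split=> H k hk; rewrite /tr.
  by rewrite add0r addrC; apply: H.
by rewrite addrC -[k%:Z]add0r; apply: H.
Qed.

Section Wall.
Variable w : seq Q.
Hypothesis hw : wall F w.

Lemma wall_at i c c' : cyl w i c -> cyl w i c' ->
  ((forall z, z < i -> c z = c' z) ->
     forall t z, z < i -> iter t F c z = iter t F c' z) /\
  ((forall z, i + (size w)%:Z <= z -> c z = c' z) ->
     forall t z, i + (size w)%:Z <= z -> iter t F c z = iter t F c' z).
Proof.
move=> /cyl_tr hc /cyl_tr hc'; have [h1 h2] := hw _ _ hc hc'.
split=> H [|t] z hz //=; first exact: H.
- have := h1 _ t.+1 (ltn0Sn t) (z - i); rewrite !iterF_tr /tr /= subrK; apply=> //.
    by move=> y hy; apply: H; lia.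
  lia.
- exact: H.
- have := h2 _ t.+1 (ltn0Sn t) (z - i); rewrite !iterF_tr /tr /= subrK; apply=> //.
    by move=> y hy; apply: H; lia.
  lia.
Qed.

Lemma isolate c c' i j : cyl w i c -> cyl w i c' -> cyl w j c -> cyl w j c' ->
  agree c c' i j -> forall t, agree (iter t F c) (iter t F c') (i + (size w)%:Z) j.
Proof.
move=> ci ci' cj cj' hag t.
have [ji|ij] := ltP j i.
  by move=> z /andP[h1 h2]; exfalso; lia.
pose c'' : config Q := fun z => if z < i then c z else c' z.
have c''i : cyl w i c''.
  by move=> k hk; rewrite /c''; case: ifP => h; [lia|apply: ci'].
have c''j : cyl w j c''.
  by move=> k hk; rewrite /c''; case: ifP => h; [lia|apply: cj'].
have [A _] := @wall_at j c c'' cj c''j.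
have [_ B] := @wall_at i c'' c' c''i ci'.
move=> z /andP[h1 h2].
rewrite (A _ t z h2); last first.
  move=> y hy; rewrite /c''; case: ifP => // hyi.
  by apply: hag; apply/andP; split; [lia|].
apply: B => //.
by move=> y hy; rewrite /c''; case: ifP => //; lia.
Qed.

End Wall.

Lemma omega_per (a : Q) s : per (size s).+1%:Z (omega a s).
Proof. by move=> z; rewrite /omega modzDr. Qed.

Lemma omega_small (a : Q) s (z : int) : 0 <= z < (size s).+1%:Z ->
  omega a s z = nth a (a :: s) `|z|%N.
Proof. by move=> h; rewrite /omega modz_small. Qed.

Section EvPer.
Variable sQ : seq Q.
Hypothesis allQ : forall q : Q, q \in sQ.

Definition enc (q : Q) : 'I_(size sQ) := Ordinal (etrans (index_mem q sQ) (allQ q)).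

Lemma enc_inj : injective enc.
Proof.
move=> q q' /(congr1 (fun i : 'I_(size sQ) => nth point sQ i)) /=.
by rewrite !nth_index.
Qed.

Lemma evper (L : nat) : (0 < L)%N -> exists K : nat, forall e, per L%:Z e ->
  exists n p : nat, [/\ (n <= K)%N, (1 <= p)%N & iter (p + n) F e = iter n F e].
Proof.
move=> L0; exists ((size sQ) ^ L)%N => e pe.
pose g (k : 'I_((size sQ) ^ L).+1) : {ffun 'I_L -> 'I_(size sQ)} :=
  [ffun j : 'I_L => enc (iter k F e j%:Z)].
have : ~~ injectiveb g.
  apply/negP => /injectiveP /leq_card; rewrite card_ffun !card_ord.
  by rewrite ltnn.
move=> /injectivePn [k1 [k2 hne hg]].
have key : forall (a b : 'I_((size sQ) ^ L).+1), g a = g b ->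
    iter a F e = iter b F e.
  move=> a b hab; apply: funext => z.
  have L0' : 0 < L%:Z by rewrite ltz_nat.
  rewrite (@per_mod _ _ (@per_iter _ a _ pe) L0') (@per_mod _ _ (@per_iter _ b _ pe) L0').
  have hz0 := modz_ge0 z (lt0r_neq0 L0'); have hzL := ltz_pmod z L0'.
  have hj : (`|(z %% L)%Z|%N < L)%N by lia.
  have := congr1 (fun f : {ffun 'I_L -> 'I_(size sQ)} => f (Ordinal hj)) hab; rewrite !ffunE /= => /enc_inj.
  by rewrite gez0_abs.
have {}hg := key _ _ hg.
case: (ltngtP k1 k2) => h.
- exists k1, (k2 - k1)%N; split; first by rewrite -ltnS.
    by rewrite subn_gt0.
  by rewrite subnK ?(ltnW h).
- exists k2, (k1 - k2)%N; split; first by rewrite -ltnS.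
    by rewrite subn_gt0.
  by rewrite subnK ?(ltnW h).
- by move/val_inj: h hne => ->; rewrite eqxx.
Qed.

End EvPer.


Lemma cat3 (s : seq Q) n k : take n s ++ take k (drop n s) ++ drop k (drop n s) = s.
Proof. by rewrite cat_take_drop cat_take_drop. Qed.

Lemma periodic_word (d : config Q) (L m : nat) (v : seq Q) : (0 < L)%N ->
  per L%:Z d -> (m + size v <= L)%N -> cyl v m%:Z d ->
  exists v1 v2 b s', v1 ++ v ++ v2 = b :: s' /\ omega b s' = d.
Proof.
move=> L0 pd hm cv.
set D := mkseq (fun k : nat => d k%:Z) L.
have sD : size D = L by rewrite size_mkseq.
have vD : take (size v) (drop m D) = v.
  have hsz : (size v <= size (drop m D))%N by rewrite size_drop sD; lia.
  apply: (@eq_from_nth _ point); first by rewrite size_takel.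
  move=> k; rewrite size_takel // => hk.
  rewrite nth_take // nth_drop /D nth_mkseq; last by lia.
  by rewrite PoszD cv.
have E := cat3 D m (size v); rewrite vD in E.
case hD : D sD => [|b s'] sD; first by move: L0; rewrite -sD.
exists (take m D), (drop (size v) (drop m D)), b, s'; split; first by rewrite -hD; exact: E.
apply: funext => z; rewrite /omega -hD.
have L0' : 0 < L%:Z by rewrite ltz_nat.
have hz0 := modz_ge0 z (lt0r_neq0 L0'); have hzL := ltz_pmod z L0'.
have sL : (size s').+1 = L := sD.
have hlt : (`|(z %% L)%Z|%N < L)%N by lia.
rewrite sL /D nth_mkseq //.
by rewrite gez0_abs // -(@per_mod _ _ pd L0').
Qed.

Lemma trap (w : seq Q) (hw : wall F w) (v : seq Q) c (i' j' T : nat) :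
  cyl w (- (size w)%:Z - i'%:Z) c -> cyl w ((size v)%:Z + j'.+1%:Z) c ->
  cyl v 0 (iter T F c) ->
  exists a s, [/\ (size w + size v + i' + j'.+1 = (size s).+1)%N,
     (exists u, w ++ u = a :: s) &
     cyl v (size w + i')%N%:Z (iter T F (omega a s))].
Proof.
move=> ci cj cv.
set i := - (size w)%:Z - i'%:Z.
set L := (size w + size v + i' + j'.+1)%N.
set P := mkseq (fun k : nat => c (i + k%:Z)) L.
have sP : size P = L by rewrite size_mkseq.
have wP : take (size w) P = w.
  have hsz : (size w <= size P)%N by rewrite sP; lia.
  apply: (@eq_from_nth _ point); first by rewrite size_takel.
  move=> k; rewrite size_takel // => hk.
  rewrite nth_take // /P nth_mkseq; last by lia.
  exact: ci.
case hP : P sP => [|a s] sP; first by move: sP => /= /esym; lia.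
exists a, s; split => //.
  by exists (drop (size w) P); rewrite -hP -{1}wP cat_take_drop.
pose e := omega a s.
have L0' : 0 < L%:Z by rewrite ltz_nat; lia.
have sL : (size s).+1 = L := sP.
have pe : per L%:Z e by rewrite -sL; apply: omega_per.
have ag : agree e (tr i c) 0 L%:Z.
  move=> z /andP[h1 h2]; rewrite /e omega_small; last by rewrite sL h1 h2.
  rewrite -hP /P nth_mkseq; last by lia.
  by rewrite /tr gez0_abs // addrC.
have ce0 : cyl w 0 e.
  move=> k hk; rewrite ag; last by apply/andP; lia.
  by rewrite /tr add0r addrC; apply: ci.
have ceL : cyl w L%:Z e.
  by move=> k hk; rewrite addrC pe -[k%:Z]add0r; apply: ce0.
have ct0 : cyl w 0 (tr i c) by exact: (proj1 (cyl_tr w i c) ci).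
have ctL : cyl w L%:Z (tr i c).
  move=> k hk; rewrite /tr.
  have -> : L%:Z + k%:Z + i = (size v)%:Z + j'.+1%:Z + k%:Z by rewrite /i /L; lia.
  exact: cj.
have iso := @isolate w hw e (tr i c) 0 L%:Z ce0 ct0 ceL ctL ag T.
move=> k hk; rewrite iso; last by apply/andP; lia.
rewrite iterF_tr /tr.
have -> : (size w + i')%N%:Z + k%:Z + i = 0 + k%:Z by rewrite /i; lia.
exact: cv.
Qed.

Lemma evper_unif (sQ : seq Q) (allQ : forall q : Q, q \in sQ) Lmax :
  exists K : nat, forall L : nat, (0 < L)%N -> (L <= Lmax)%N -> forall e, per L%:Z e ->
  exists n p : nat, [/\ (n <= K)%N, (1 <= p)%N & iter (p + n) F e = iter n F e].
Proof.
elim: Lmax => [|Lm [K1 H1]].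
  by exists 0%N => L L0 hL; exfalso; lia.
have [K2 H2] := @evper sQ allQ Lm.+1 (ltn0Sn _).
exists (maxn K1 K2) => L L0 hL e pe.
have [hle|hgt] := leqP L Lm.
  have [n [p [hn hp he]]] := H1 L L0 hle e pe.
  by exists n, p; split => //; rewrite (leq_trans hn) // leq_maxl.
have hL' : L = Lm.+1 by lia.
rewrite hL' in pe.
have [n [p [hn hp he]]] := H2 e pe.
by exists n, p; split => //; rewrite (leq_trans hn) // leq_maxr.
Qed.

End Comb.
Arguments tr {Q}. Arguments agree {Q}. Arguments per {Q}.



Section Meas.
Variable Q : pointedType.
Variable sQ : seq Q.
Hypothesis allQ : forall q : Q, q \in sQ.

Definition determined (S : set (config Q)) (a : int) (L : nat) :=
  forall c c', agree c c' a (a + L%:Z) -> S c -> S c'.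

Definition upd (c : config Q) (a : int) (q : Q) : config Q :=
  fun z => if z == a then q else c z.

Lemma cylm u i : measurable (cyl u i : set (CfgSpace Q)).
Proof. by apply: sub_gen_smallest; exists u, i. Qed.

Lemma det_meas L : forall S a, determined S a L ->
  measurable (S : set (CfgSpace Q)).
Proof.
elim: L => [|L IH] S a hS.
  have [[c0 Sc0]|S0] := pselect (exists c, S c).
    suff -> : S = setT by exact: measurableT.
    apply/seteqP; split=> // c _; apply: (hS c0) => // z; lia.
  suff -> : S = set0 by exact: measurable0.
  by apply/seteqP; split=> // c Sc; apply: S0; exists c.
pose Sq (q : Q) : set (config Q) := [set c | S (upd c a q)].
have -> : S = \big[setU/set0]_(q <- sQ) (cyl [:: q] a `&` Sq q).
  rewrite -bigcup_seq; apply/seteqP; split.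
    move=> c Sc; exists (c a); first exact: allQ.
    split; first by move=> [|k] //= _; rewrite addr0.
    rewrite /Sq /=; suff -> : upd c a (c a) = c by [].
    by apply: funext => z; rewrite /upd; case: eqP => // ->.
  move=> c [q _ [cq Sqc]]; move: Sqc; rewrite /Sq /=.
  suff -> : upd c a q = c by [].
  apply: funext => z; rewrite /upd; case: eqP => // ->.
  by have := cq 0%N isT; rewrite addr0.
apply: bigsetU_measurable => q _; apply: measurableI; first exact: cylm.
apply: (IH _ (a + 1)) => c c' hcc'; rewrite /Sq /=; apply: hS => z hz.
rewrite /upd; case: eqP => // hza; apply: hcc'; lia.
Qed.

Lemma cyl_det u i : determined (cyl u i) i (size u).
Proof. move=> c c' hag hc k hk; rewrite -hag ?hc //; lia. Qed.

Lemma cyl_shift (u : seq Q) i (c : config Q) : cyl u i (@Defs.shift Q c) <-> cyl u (i + 1) c.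
Proof.
rewrite /Defs.shift; split=> H k hk.
  by have := H k hk; rewrite addrAC.
by rewrite -H // addrAC.
Qed.

Lemma shift_pre_cyl (u : seq Q) i : (@Defs.shift Q) @^-1` cyl u i = cyl u (i + 1).
Proof. by apply/seteqP; split=> c /=; rewrite cyl_shift. Qed.

Lemma cyl_agree (c c' : config Q) a b (u : seq Q) i : agree c c' a b -> a <= i ->
  i + (size u)%:Z <= b -> cyl u i c -> cyl u i c'.
Proof. by move=> hag h1 h2 hc k hk; rewrite -hag ?hc //; apply/andP; lia. Qed.

Lemma pre_det r (delta : (r.*2.+1).-tuple Q -> Q) T (v : seq Q) :
  determined (iter T (ca_global delta) @^-1` cyl v 0) (- (r * T)%N%:Z)
    (size v + 2 * (r * T))%N.
Proof.
move=> c c' hag /= hc k hk.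
have H : agree (iter T (ca_global delta) c) (iter T (ca_global delta) c') 0 (size v)%:Z.
  by apply: iterF_local; apply: agree_sub hag; lia.
by rewrite -H ?hc //; apply/andP; lia.
Qed.

Section Prob.
Variable R : realType.
Variable mu : probability (CfgSpace Q) R.

Lemma shift_fam (hinv : shift_invariant mu) (G : int -> set (config Q)) :
  (forall m, measurable (G m : set (CfgSpace Q))) ->
  (forall m, (@Defs.shift Q) @^-1` G m = G (m + 1)) ->
  forall m, mu (G m) = mu (G 0).
Proof.
move=> mG sG.
have step m : mu (G (m + 1)) = mu (G m) by rewrite -sG hinv.
have pos (n : nat) : mu (G n%:Z) = mu (G 0).
  by elim: n => // n IH; rewrite -[n.+1]addn1 PoszD step.
have neg (n : nat) : mu (G (- n%:Z)) = mu (G 0).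
  elim: n => // n IH; rewrite -IH -[n.+1]addn1 PoszD.
  by rewrite -(step (- (n%:Z + 1%:Z))); congr (mu (G _)); ring.
case=> n; first exact: pos.
by rewrite NegzE neg.
Qed.

Lemma mu_cyl (hinv : shift_invariant mu) (u : seq Q) i : mu (cyl u i) = mu (cyl u 0).
Proof.
apply: (@shift_fam hinv (fun i => cyl u i)) => m; first exact: cylm.
exact: shift_pre_cyl.
Qed.

Lemma ergo_one (herg : shift_ergodic mu) (G : (set (config Q))^nat) :
  (forall k, measurable (G k : set (CfgSpace Q))) ->
  (forall k, mu (G k) = mu (G 0%N)) ->
  (forall k, G k.+1 `<=` G k) ->
  (@Defs.shift Q) @^-1` (\bigcap_k G k) = \bigcap_k G k ->
  (0 < mu (G 0%N))%E ->
  mu (\bigcap_k G k) = 1%E.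
Proof.
move=> mG cG dG sH pos.
have mH : measurable (\bigcap_k G k : set (CfgSpace Q)) by exact: bigcapT_measurable.
have : mu (\bigcap_k G k) = mu (G 0%N).
  have := @nonincreasing_cvg_mu _ (CfgSpace Q) R mu G.
  have hfin : (mu (G 0%N) < +oo)%E.
    by apply: (le_lt_trans (probability_le1 mu (mG 0%N))); rewrite ltry.
  move=> /(_ hfin mG mH) h.
  have dec : nonincreasing_seq G.
    by apply/nonincreasing_seqP => n; apply/subsetPset; exact: dG.
  move: (h dec).
  have -> : mu \o G = fun _ => mu (G 0%N) by apply: funext => k /=; rewrite cG.
  move=> /(cvg_lim (@ereal_hausdorff R)).
  by rewrite lim_cst // => <-.
move=> hH; have [_ E] := herg.
case: (E _ mH sH) => // h0.
by move: pos; rewrite -hH h0 ltxx.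
Qed.

Lemma prob_I1 (A B : set (CfgSpace Q)) : measurable A -> measurable B ->
  mu A = 1%E -> mu B = 1%E -> mu (A `&` B) = 1%E.
Proof.
move=> mA mB hA hB.
have mAB : measurable (A `&` B) by exact: measurableI.
have h0 : mu (~` (A `&` B)) = 0%E.
  apply/eqP; rewrite eq_le measure_ge0 andbT setCI.
  apply: (le_trans (measureU2 mu (measurableC mA) (measurableC mB))).
  change (mu (~` A) + mu (~` B) <= 0)%E.
  by rewrite (probability_setC mu mA) (probability_setC mu mB) hA hB subee // adde0.
have fin : mu (A `&` B) \is a fin_num by apply: fin_num_measure.
move: h0; rewrite (probability_setC mu mAB) -(fineK fin) -EFinB => -[] h.
by rewrite (_ : fine (mu (A `&` B)) = 1) //; lra.
Qed.

Section Occ.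
Variable w : seq Q.
Hypothesis herg : shift_ergodic mu.
Hypothesis hfs : full_support mu.

Definition occR (m : int) : set (config Q) := \bigcup_(k in setT) cyl w (m + k%:Z).
Definition occL (m : int) : set (config Q) := \bigcup_(k in setT) cyl w (m - k%:Z).

Lemma occR_m m : measurable (occR m : set (CfgSpace Q)).
Proof. by apply: bigcupT_measurable => k; exact: cylm. Qed.
Lemma occL_m m : measurable (occL m : set (CfgSpace Q)).
Proof. by apply: bigcupT_measurable => k; exact: cylm. Qed.

Lemma occR_shift m c : occR m (@Defs.shift Q c) <-> occR (m + 1) c.
Proof.
split=> -[k _ h]; exists k => //.
  by move: h; rewrite cyl_shift addrAC.
by rewrite cyl_shift addrAC.
Qed.

Lemma occL_shift m c : occL m (@Defs.shift Q c) <-> occL (m + 1) c.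
Proof.
split=> -[k _ h]; exists k => //.
  by move: h; rewrite cyl_shift addrAC.
by rewrite cyl_shift addrAC.
Qed.

Lemma HR_one : mu (\bigcap_(k in setT) occR k%:Z) = 1%E.
Proof.
have hinv := proj1 herg.
apply: (@ergo_one herg (fun k : nat => occR k%:Z)).
- by move=> k; exact: occR_m.
- move=> k; rewrite (@shift_fam hinv occR) //; first exact: occR_m.
  by move=> m; apply/seteqP; split=> c /=; rewrite occR_shift.
- move=> k c [j _ h]; exists j.+1 => //.
  by move: h; rewrite -addn1 -[j.+1]addn1 !PoszD addrAC addrA.
- apply/seteqP; split=> c /= H k _.
    have := H k I; rewrite occR_shift => -[j _ h]; exists j.+1 => //.
    by move: h; rewrite -[j.+1]addn1 PoszD addrAC addrA.
  by rewrite occR_shift; have := H k.+1 I; rewrite -addn1 PoszD.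
- apply: (lt_le_trans (hfs w)); apply: le_measure; rewrite ?inE.
  + exact: cylm.
  + exact: occR_m.
  + by move=> c h; exists 0%N => //; rewrite addr0.
Qed.

Lemma HL_one : mu (\bigcap_(k in setT) occL (- k%:Z)) = 1%E.
Proof.
have hinv := proj1 herg.
apply: (@ergo_one herg (fun k : nat => occL (- k%:Z))).
- by move=> k; exact: occL_m.
- move=> k; rewrite (@shift_fam hinv occL) //; first exact: occL_m.
  by move=> m; apply/seteqP; split=> c /=; rewrite occL_shift.
- move=> k c [j _ h]; exists j.+1 => //.
  have E : - k%:Z - j.+1%:Z = - k.+1%:Z - j%:Z by lia.
  by rewrite E.
- apply/seteqP; split=> c /= H k _.
    have := H k.+1 I; rewrite occL_shift => -[j _ h]; exists j => //.
    have E : - k%:Z - j%:Z = - k.+1%:Z + 1 - j%:Z by lia.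
    by rewrite E.
  rewrite occL_shift; have [j _ h] := H k I; exists j.+1 => //.
  have E : - k%:Z + 1 - j.+1%:Z = - k%:Z - j%:Z by lia.
  by rewrite E.
- apply: (lt_le_trans (hfs w)); apply: le_measure; rewrite ?inE.
  + exact: cylm.
  + exact: occL_m.
  + by move=> c h; exists 0%N => //; rewrite subr0.
Qed.

Variable v : seq Q.
Definition AN (N : nat) : set (config Q) := [set c | exists i' j',
  [/\ (i' <= N)%N, (j' <= N)%N, cyl w (- (size w)%:Z - i'%:Z) c &
      cyl w ((size v)%:Z + j'.+1%:Z) c]].

Lemma AN_m N : measurable (AN N : set (CfgSpace Q)).
Proof.
apply: (@det_meas (2 * N + 2 * size w + size v + 2)%N _ (- (size w)%:Z - N%:Z)).
move=> c c' hag [i' [j' [hi hj ci cj]]]; exists i', j'; split => //.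
  by apply: (@cyl_agree c c' _ _ _ _ hag) ci; lia.
by apply: (@cyl_agree c c' _ _ _ _ hag) cj; lia.
Qed.

Lemma AN_one : mu (\bigcup_(N in setT) AN N) = 1%E.
Proof.
have mU : measurable (\bigcup_(N in setT) AN N : set (CfgSpace Q)).
  by apply: bigcupT_measurable => N; exact: AN_m.
have mL : measurable (\bigcap_(k in setT) occL (- k%:Z) : set (CfgSpace Q)).
  by apply: bigcapT_measurable => k; exact: occL_m.
have mR : measurable (\bigcap_(k in setT) occR k%:Z : set (CfgSpace Q)).
  by apply: bigcapT_measurable => k; exact: occR_m.
apply/eqP; rewrite eq_le probability_le1 //=.
rewrite -(@prob_I1 _ _ mL mR HL_one HR_one); apply: le_measure; rewrite ?inE //.
  exact: measurableI.
move=> c [hL hR].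
have [i' _ ci] := hL (size w) I.
have [j' _ cj] := hR (size v).+1 I.
exists (maxn i' j') => //; exists i', j'; split; [exact: leq_maxl|exact: leq_maxr| |].
  by move: ci; rewrite (_ : - (size w)%:Z - i'%:Z = - (size w)%:Z - i'%:Z).
have E : (size v)%:Z + j'.+1%:Z = (size v).+1%:Z + j'%:Z by lia.
by rewrite E.
Qed.

Lemma AN_big (eps : R) : 0 < eps -> exists N, ((1 - eps)%:E <= mu (AN N))%E.
Proof.
move=> e0.
have ndA : nondecreasing_seq AN.
  apply/nondecreasing_seqP => n; apply/subsetPset.
  move=> c [i' [j' [hi hj ci cj]]]; exists i', j'; split => //; lia.
have mU : measurable (\bigcup_(N in setT) AN N : set (CfgSpace Q)).
  by apply: bigcupT_measurable => N; exact: AN_m.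
have h := @nondecreasing_cvg_mu _ (CfgSpace Q) R mu AN AN_m mU ndA.
have h' : mu \o AN @ \oo --> 1%E by rewrite -AN_one; exact: h.
have [_ hf] := (fine_cvgP _ _).1 h'.
move/cvgrPdist_le: hf => /(_ eps e0) [N _ HN].
exists N; have := HN N (leqnn N) => /=.
have fin : mu (AN N) \is a fin_num by apply: fin_num_measure; exact: AN_m.
rewrite -(fineK fin) lee_fin ler_norml => /andP[h1 h2]; lra.
Qed.

End Occ.

End Prob.

End Meas.



Theorem proposition1 (Q : pointedType) (hQ : finite_set [set: Q])
  (R : realType) (mu : probability (CfgSpace Q) R)
  (r : nat) (delta : (r.*2.+1).-tuple Q -> Q) (w : seq Q) :
  shift_ergodic mu -> full_support mu -> wall (ca_global delta) w ->
  forall v : seq Q,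
    L_mu mu (ca_global delta) v <->
    exists (t p : nat) (v1 v2 u : seq Q) (a b : Q) (s s' : seq Q),
      [/\ (1 <= t)%N, (1 <= p)%N,
          w ++ u = a :: s /\ v1 ++ v ++ v2 = b :: s',
          iter t (ca_global delta) (omega a s) = omega b s' &
          iter p (ca_global delta) (omega b s') = omega b s'].
Proof.
move=> herg hfs hw v.
have [sQ allQ] : exists sQ : seq Q, forall q, q \in sQ.
  have [sQ hs] := (finite_seqP _).1 hQ.
  by exists sQ => q; have : [set: Q] q by []; rewrite hs.
set F := ca_global delta.
have mpre T : measurable (iter T F @^-1` cyl v 0 : set (CfgSpace Q)).
  exact: (@det_meas Q sQ allQ _ _ _ (@pre_det Q r delta T v)).
split.
- move=> hL; apply: contrapT => hnot; apply: hL.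
  apply/fine_cvgP; split.
    by apply: nearW => T; apply: fin_num_measure; exact: mpre.
  apply/cvgrPdist_le => eps e0.
  have [N hN] := @AN_big Q sQ allQ R mu w herg hfs v eps e0.
  set Lmax := (size w + size v + N + N.+1)%N.
  have [K hK] := @evper_unif Q r delta sQ allQ Lmax.
  exists K.+1 => // T /= hT.
  have sub : (iter T F @^-1` cyl v 0) `<=` ~` AN Q w v N.
    move=> c hc [i' [j' [hi hj ci cj]]]; apply: hnot.
    have [a [s [hLs [u hu] cvT]]] := @trap Q r delta w hw v c i' j' T ci cj hc.
    pose L := (size s).+1.
    have pe : per L%:Z (omega a s) := @omega_per Q a s.
    have [n [p [hn hp hnp]]] := hK L (ltn0Sn _) (ltac:(rewrite /L; lia)) _ pe.
    pose d := iter T F (omega a s).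
    have hT' : (n <= T)%N by lia.
    have dfix : iter p F d = d.
      rewrite /d -iterD.
      have -> : (p + T = (T - n) + (p + n))%N by lia.
      by rewrite iterD hnp -iterD subnK.
    have pd : per L%:Z d := @per_iter Q r delta _ T _ pe.
    have hm : (size w + i' + size v <= L)%N by rewrite /L; lia.
    have [v1 [v2 [b [s' [hcat hom]]]]] := @periodic_word Q d L (size w + i') v (ltn0Sn _) pd hm cvT.
    exists T, p, v1, v2, u, a, b, s, s'; split.
    + by lia.
    + exact: hp.
    + by split.
    + by rewrite -/d hom.
    + by rewrite hom dfix.
  have mA := @AN_m Q sQ allQ w v N.
  have le1 : (mu (iter T F @^-1` cyl v 0) <= mu (~` AN Q w v N))%E.
    by apply: le_measure; rewrite ?inE; [exact: mpre|exact: measurableC|].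
  have fin : mu (iter T F @^-1` cyl v 0) \is a fin_num.
    by apply: fin_num_measure; exact: mpre.
  have ge0 : 0 <= fine (mu (iter T F @^-1` cyl v 0)).
    by apply: fine_ge0; exact: measure_ge0.
  rewrite sub0r normrN ger0_norm //.
  rewrite -lee_fin fineK //; apply: (le_trans le1).
  rewrite (probability_setC mu mA).
  have finA : mu (AN Q w v N) \is a fin_num by apply: fin_num_measure.
  move: hN; rewrite -(fineK finA) lee_fin -EFinB lee_fin; lra.
- move=> [t [p [v1 [v2 [u [a [b [s [s' [ht hp [hwu hv] hT hP]]]]]]]]]] hcvg.
  pose M := (size s).+1; pose Lb := (size s').+1; pose K := Lb.+2.
  have hwM : (size w <= M)%N.
    by have := congr1 size hwu; rewrite size_cat /M /= => <-; exact: leq_addr.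
  have hvL : (size v1 + size v + size v2 = Lb)%N.
    by have := congr1 size hv; rewrite !size_cat /Lb /= addnA.
  pose e := omega a s; pose d := omega b s'.
  pose P := mkseq (fun k : nat => e k%:Z) (M * K + size w).
  pose i0 : int := - (M%:Z + (size v1)%:Z).
  have pe : per M%:Z e := @omega_per Q a s.
  have ew : cyl w 0 e.
    move=> k hk; rewrite add0r /e omega_small; last by apply/andP; rewrite /M; lia.
    rewrite absz_nat -hwu nth_cat hk; exact: set_nth_default.
  have eMK : cyl w (M * K)%N%:Z e.
    move=> k hk; rewrite addrC PoszM mulrC (@per_mul Q _ _ pe).
    by have := ew k hk; rewrite add0r.
  have dfix n : iter (n * p) F d = d.
    elim: n => // n IH; rewrite mulSn iterD IH; exact: hP.
  have pd : per M%:Z d by rewrite /d -hT; exact: (@per_iter Q r delta _ t _ pe).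
  have dv k : (k < size v)%N -> d (size v1 + k)%N%:Z = nth point v k.
    move=> hk; rewrite /d omega_small; last by apply/andP; rewrite /Lb; lia.
    rewrite absz_nat -hv nth_cat ltnNge leq_addr /= addKn nth_cat hk.
    exact: set_nth_default.
  have sub n : cyl P i0 `<=` iter (n * p + t) F @^-1` cyl v 0.
    move=> c hc k hk /=.
    pose c0 := tr i0 c.
    have ag : agree e c0 0 (M * K + size w)%N%:Z.
      move=> z /andP[z0 zl]; rewrite /c0 /tr.
      have hz : (`|z|%N < M * K + size w)%N by lia.
      have := hc `|z|%N; rewrite size_mkseq => /(_ hz).
      by rewrite nth_mkseq // gez0_abs // addrC => ->.
    have c0w : cyl w 0 c0 by apply: (@cyl_agree Q e c0 _ _ _ _ ag) ew; lia.
    have c0MK : cyl w (M * K)%N%:Z c0.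
      by apply: (@cyl_agree Q e c0 _ _ _ _ ag) eMK; lia.
    have iso := @isolate Q r delta w hw e c0 0 (M * K)%N%:Z ew c0w eMK c0MK.
    have ag' : agree e c0 0 (M * K)%N%:Z by apply: agree_sub ag; lia.
    have := iso ag' (n * p + t)%N (k%:Z - i0).
    rewrite iterF_tr /tr subrK add0r => <-; last first.
      apply/andP; split; first by rewrite /i0; lia.
      have : (Lb <= M * Lb)%N by rewrite leq_pmull.
      rewrite /i0 /K /M mulnS mulnS; lia.
    rewrite iterD hT dfix.
    have -> : k%:Z - i0 = (size v1 + k)%N%:Z + M%:Z by rewrite /i0; lia.
    by rewrite pd dv.
  set f := fun T => mu (iter T F @^-1` cyl v 0).
  have hinv := proj1 herg.
  have d0 := hfs P.
  have fd : mu (cyl P 0) \is a fin_num by apply: fin_num_measure; exact: cylm.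
  have fpos : 0 < fine (mu (cyl P 0)) by rewrite -lte_fin fineK.
  have [_ hf] := (fine_cvgP _ _).1 hcvg.
  move/cvgrPdist_le: hf => /(_ (fine (mu (cyl P 0)) / 2)) [].
    by lra.
  move=> N0 _ HN.
  have hN0 : (N0 <= N0 * p + t)%N.
    by have := leq_pmulr N0 hp; lia.
  have := HN _ hN0; rewrite /=.
  have le1 : (mu (cyl P 0) <= mu (iter (N0 * p + t) F @^-1` cyl v 0))%E.
    rewrite -(@mu_cyl Q R mu hinv P i0).
    apply: le_measure; rewrite ?inE; [exact: cylm|exact: mpre|exact: sub].
  have finT : mu (iter (N0 * p + t) F @^-1` cyl v 0) \is a fin_num.
    by apply: fin_num_measure; exact: mpre.
  have := fine_le fd finT le1.
  have ge0 : 0 <= fine (mu (iter (N0 * p + t) F @^-1` cyl v 0)).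
    by apply: fine_ge0; exact: measure_ge0.
  rewrite sub0r normrN ger0_norm //; lra.
Qed.
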